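(* (i) Let $G$ be a block graph with at least one cut-vertex, $\omega=\omega(G)$ and $\tilde{\Delta}=\tilde{\Delta}(G)$. Then $\Gamma(G)\le\tilde{\Delta}(\omega-1)+1$. (ii) For any integers $t\ge2$ and $p\ge2$ there exists a graph $G_{t,p}$ with $\tilde{\Delta}(G_{t,p})=t$, $\omega(G_{t,p})=p$ and $\Gamma(G_{t,p})=t(p-1)+1$.
   Context: A Grundy-coloring of a graph $G$ is a proper coloring with nonempty color classes $C_1,\ldots,C_k$ such that for $i<j$ each vertex of $C_j$ has a neighbor in $C_i$; $\Gamma(G)$ is the maximum number of colors of a Grundy-coloring. $\omega(G)$ is the clique number. A block is a maximal 2-connected subgraph or a bridge; a block graph is a graph all of whose blocks are complete. The block-cutpoint graph of $G$ is the bipartite graph with one part the set of cut-vertices of $G$ and the other part having a vertex $b_i$ for each block $B_i$, where a cut-vertex $v$ is adjacent to $b_i$ iff $v\in B_i$. $\tilde{\Delta}(G)$ is the maximum degree of a cut-vertex in the block-cutpoint graph, i.e. the maximum number of blocks containing a single cut-vertex. *)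

(* Defs.v *)
From mathcomp Require Import all_boot all_order.
Set Implicit Arguments. Unset Strict Implicit. Unset Printing Implicit Defensive.

Section Graphs.
Variables (T : finType) (e : rel T).

Definition simple_graph : Prop := symmetric e /\ irreflexive e.

Definition induced (S : {set T}) : rel T :=
  [rel x y | [&& e x y, x \in S & y \in S]].

Definition connected_set (S : {set T}) : bool :=
  [forall x in S, forall y in S, connect (induced S) x y].

Definition cut_vertex (v : T) : bool :=
  [exists x, exists y, [&& x != v, y != v, connect e x y &
     ~~ connect (induced [set~ v]) x y]].

Definition two_connected (S : {set T}) : bool :=
  [&& 2 < #|S|, connected_set S & [forall x in S, connected_set (S :\ x)]].

Definition edge_set (S : {set T}) : bool :=
  [exists u, exists v, (S == [set u; v]) && e u v].

Definition block_cand (S : {set T}) : bool := two_connected S || edge_set S.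

(* block: maximal 2-connected subgraph or bridge (maximal among the
   candidates; 2-connected subgraphs are induced, so vertex sets suffice) *)
Definition block (S : {set T}) : bool :=
  block_cand S && [forall S' : {set T}, (S \subset S') && block_cand S' ==> (S' == S)].

Definition clique (S : {set T}) : bool :=
  [forall x in S, forall y in S, (x != y) ==> e x y].

Definition block_graph : Prop := forall B : {set T}, block B -> clique B.

Definition has_cut_vertex : Prop := exists v, cut_vertex v.

Definition omega : nat := \max_(S : {set T} | clique S) #|S|.

Definition delta_tilde : nat :=
  \max_(v | cut_vertex v) #|[set B : {set T} | block B & v \in B]|.

(* Grundy colouring with colours 1..k (value 0 of 'I_k.+1 unused) *)
Definition grundy_coloring (k : nat) (c : {ffun T -> 'I_k.+1}) : bool :=
  [&& [forall x, 0 < c x],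
      [forall i : 'I_k.+1, (0 < i) ==> [exists x, c x == i]],
      [forall x, forall y, e x y ==> (c x != c y)] &
      [forall x, forall i : 'I_k.+1,
          (0 < i < c x) ==> [exists y, e x y && (c y == i)]]].

Definition has_grundy (k : nat) : bool :=
  [exists c : {ffun T -> 'I_k.+1}, grundy_coloring c].

(* Grundy number: a Grundy colouring has at most #|T| (nonempty) classes *)
Definition grundy_number : nat :=
  \max_(k < #|T|.+1 | has_grundy k) k.

End Graphs.

(* Main.v *)
Require Import Defs.
From mathcomp Require Import all_boot all_order.
From mathcomp Require Import zify.
Set Implicit Arguments. Unset Strict Implicit. Unset Printing Implicit Defensive.

Section Gen.
Variables (T : finType) (e : rel T).
Hypothesis esym : symmetric e.
Hypothesis eirr : irreflexive e.
Implicit Types (S A B : {set T}) (x y z u v a b : T).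

Lemma induced_sym S : symmetric (induced e S).
Proof. by move=> x y; rewrite /induced /= esym; case: (x \in S); case: (y \in S); rewrite ?andbF. Qed.

Lemma isym S x y : connect (induced e S) x y = connect (induced e S) y x.
Proof. exact: (sym_connect_sym (induced_sym S)). Qed.

Lemma conn_sub A B x y : A \subset B -> connect (induced e A) x y -> connect (induced e B) x y.
Proof.
move=> AB; apply: connect_sub => a b /=; rewrite /induced /= => /and3P[eab aA bA].
by apply: connect1; rewrite /induced /= eab !(subsetP AB).
Qed.

Lemma ind1 A x y : e x y -> x \in A -> y \in A -> connect (induced e A) x y.
Proof. by move=> exy xA yA; apply: connect1; rewrite /induced /= exy xA yA. Qed.

Lemma path_conn A x p : path e x p -> all (mem A) (x :: p) ->
  forall a, a \in x :: p -> connect (induced e A) x a.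
Proof.
elim: p x => [|y p IH] x /=.
  by move=> _ _ a; rewrite inE => /eqP->.
move=> /andP[exy pp] /and3P[xA yA allp] a; rewrite inE => /orP[/eqP->//|ain].
apply: connect_trans (ind1 exy xA yA) _; apply: IH => //=; by rewrite yA.
Qed.

Lemma connected_root A r : r \in A -> (forall a, a \in A -> connect (induced e A) a r) ->
  connected_set e A.
Proof.
move=> rA H; apply/forallP => x; apply/implyP => xA; apply/forallP => y; apply/implyP => yA.
by apply: connect_trans (H _ xA) _; rewrite isym; apply: H.
Qed.

Lemma connected_conn A x y : connected_set e A -> x \in A -> y \in A -> connect (induced e A) x y.
Proof. by move=> /forallP/(_ x)/implyP H xA; move/(_ xA)/forallP/(_ y)/implyP: H; apply. Qed.

Lemma connected_setU A B z : connected_set e A -> connected_set e B -> z \in A -> z \in B ->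
  connected_set e (A :|: B).
Proof.
move=> cA cB zA zB; apply: (@connected_root _ z); first by rewrite inE zA.
move=> a; rewrite inE => /orP[aA|aB].
  by apply: (conn_sub (subsetUl A B)); apply: connected_conn.
by apply: (conn_sub (subsetUr A B)); apply: connected_conn.
Qed.

Lemma setD1_notin (A : {set T}) z : z \notin A -> A :\ z = A.
Proof. move=> zA; apply/setP => x; rewrite !inE; case: eqP => // ->; by rewrite (negbTE zA). Qed.

Lemma two_connU (S1 S2 : {set T}) x y : two_connected e S1 -> two_connected e S2 -> x != y ->
  x \in S1 -> y \in S1 -> x \in S2 -> y \in S2 -> two_connected e (S1 :|: S2).
Proof.
move=> /and3P[c1 k1 d1] /and3P[c2 k2 d2] xy x1 y1 x2 y2; apply/and3P; split.
- by apply: leq_trans c1 _; apply: subset_leq_card; apply: subsetUl.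
- exact: (connected_setU k1 k2 x1 x2).
apply/forallP => z; apply/implyP => _; rewrite setDUl.
have H1 : connected_set e (S1 :\ z).
  case: (boolP (z \in S1)) => zS; first by move/forallP: d1 => /(_ z)/implyP; apply.
  by rewrite setD1_notin.
have H2 : connected_set e (S2 :\ z).
  case: (boolP (z \in S2)) => zS; first by move/forallP: d2 => /(_ z)/implyP; apply.
  by rewrite setD1_notin.
case: (eqVneq z x) => [zx|zx].
  apply: (connected_setU H1 H2 (z := y)); rewrite !inE ?y1 ?y2 andbT; by rewrite zx eq_sym.
by apply: (connected_setU H1 H2 (z := x)); rewrite !inE ?x1 ?x2 andbT eq_sym.
Qed.

Lemma edge_sub (S1 S2 : {set T}) x y : edge_set e S1 -> x != y -> x \in S1 -> y \in S1 ->
  x \in S2 -> y \in S2 -> S1 \subset S2.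
Proof.
move=> /existsP[u /existsP[v /andP[/eqP-> _]]] xy; rewrite !inE => hx hy x2 y2.
apply/subsetP => z; rewrite !inE => /orP[]/eqP->.
- case/orP: hx => [/eqP<-//|/eqP xv]; case/orP: hy => [/eqP<-//|/eqP yv].
  by move: xy; rewrite xv yv eqxx.
- case/orP: hx => [/eqP xu|/eqP<-//]; case/orP: hy => [/eqP yu|/eqP<-//].
  by move: xy; rewrite xu yu eqxx.
Qed.

Lemma candU (S1 S2 : {set T}) x y : block_cand e S1 -> block_cand e S2 -> x != y ->
  x \in S1 -> y \in S1 -> x \in S2 -> y \in S2 -> block_cand e (S1 :|: S2).
Proof.
move=> c1 c2 xy x1 y1 x2 y2.
case/orP: (c1) => [t1|ed1].
  case/orP: (c2) => [t2|ed2].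
    by rewrite /block_cand (two_connU t1 t2 xy x1 y1 x2 y2).
  by move/setUidPl: (edge_sub ed2 xy x2 y2 x1 y1) => ->.
by move/setUidPr: (edge_sub ed1 xy x1 y1 x2 y2) => ->.
Qed.

Lemma block_eq (B1 B2 : {set T}) x y : block e B1 -> block e B2 -> x != y ->
  x \in B1 -> y \in B1 -> x \in B2 -> y \in B2 -> B1 = B2.
Proof.
move=> /andP[c1 m1] /andP[c2 m2] xy x1 y1 x2 y2.
have cU := candU c1 c2 xy x1 y1 x2 y2.
move/forallP: m1 => /(_ (B1 :|: B2)); rewrite subsetUl cU /= => /eqP h1.
move/forallP: m2 => /(_ (B1 :|: B2)); rewrite subsetUr cU /= => /eqP h2.
by rewrite -h1 h2.
Qed.

Lemma cand_in_block S : block_cand e S -> exists2 B, block e B & S \subset B.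
Proof.
move=> cS.
have P0 : (S \subset S) && block_cand e S by rewrite subxx cS.
case: (@arg_maxnP _ S (fun S' : {set T} => (S \subset S') && block_cand e S') (fun S' : {set T} => #|S'|) P0) => B /andP[SB cB] Hmax.
exists B => //; apply/andP; split => //; apply/forallP => S'; apply/implyP => /andP[BS' cS'].
have := Hmax S'; rewrite (subset_trans SB BS') cS' => /(_ isT) le.
by rewrite eq_sym eqEcard BS' /=; exact: le.
Qed.

Lemma cand_card S : block_cand e S -> 1 < #|S|.
Proof.
case/orP => [/and3P[h _ _]|/existsP[u /existsP[v /andP[/eqP-> euv]]]]; first exact: ltnW.
rewrite cards2; case: eqP => // uv; by move: euv; rewrite uv eirr.
Qed.

Lemma cand_connected S : block_cand e S -> connected_set e S.
Proof.
case/orP => [/and3P[_ h _] //|/existsP[u /existsP[v /andP[/eqP-> euv]]]].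
apply: (@connected_root _ v); first by rewrite !inE eqxx orbT.
move=> a; rewrite !inE => /orP[]/eqP->; last exact: connect0.
by apply: ind1; rewrite // !inE eqxx ?orbT.
Qed.

Lemma edge_cand u v : e u v -> block_cand e [set u; v].
Proof. by move=> euv; apply/orP; right; apply/existsP; exists u; apply/existsP; exists v; rewrite eqxx euv. Qed.

Lemma path_conn' A x p : path e x p -> all (mem A) (x :: p) ->
  forall a, a \in x :: p -> connect (induced e A) a x.
Proof. by move=> pp al a ain; rewrite isym; exact: (path_conn pp al ain). Qed.

Lemma cycle_two u x p : path e x p -> uniq (x :: p) -> u \notin x :: p -> e u x ->
  e u (last x p) -> x != last x p -> two_connected e (u |: [set z in x :: p]).
Proof.
move=> pp up unp eux euy xy.
set S := u |: [set z in x :: p].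
have inS z : z \in x :: p -> z \in S by move=> h; rewrite in_setU1 in_set h orbT.
have uS : u \in S by rewrite !inE eqxx.
have xu : x != u by apply/eqP => h; move: unp; rewrite h mem_head.
have exu : e x u by rewrite esym.
have eyu : e (last x p) u by rewrite esym.
apply/and3P; split.
- rewrite cardsU1 inE unp cardsE; move/card_uniqP: up => ->.
  by case: p {pp unp uS S inS euy eyu} xy => [|y0 p'] /=; rewrite ?eqxx.
- apply: (@connected_root _ u uS) => a; rewrite !inE => /orP[/eqP->|ain].
    exact: connect0.
  apply: connect_trans (path_conn' pp _ ain) _.
    by apply/allP => w /inS.
  by apply: ind1 => //; apply: inS; apply: mem_head.
apply/forallP => z; apply/implyP; rewrite {1}/S in_setU1 in_set => /orP[/eqP zu|zin].
  apply: (@connected_root _ x); first by rewrite zu in_setD1 xu /=; apply: inS; exact: mem_head.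
  move=> a; rewrite !inE => /andP[az /orP[/eqP au|ain]]; first by move: az; rewrite au zu eqxx.
  apply: (path_conn' pp _ ain); apply/allP => w win /=; rewrite in_setD1 (inS _ win) andbT.
  by apply/eqP => h; move: unp; rewrite -zu -h win.
have zu : z != u by apply/eqP => h; move: unp; rewrite -h zin.
have [p1 [p2 E]] : exists p1 p2, x :: p = p1 ++ z :: p2.
  by case/splitPr: zin => p1 p2; exists p1, p2.
have := up; rewrite E cat_uniq => /and3P[_ hz1 /andP[zp2 _]].
have zp1 : z \notin p1 by move: hz1; apply: contra => h; rewrite /= h.
have [P2 L2] : path e z p2 /\ last z p2 = last x p.
  move: pp; case: p1 E {hz1 zp1} => [|x1 p1'] /= [-> ->] pp; first by split.
  rewrite last_cat /=; split => //; move: pp; rewrite cat_path => /andP[_ /andP[_ H]]; exact: H.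
apply: (@connected_root _ u); first by rewrite in_setD1 uS andbT eq_sym.
move=> a; rewrite in_setD1 in_setU1 in_set => /andP[az /orP[/eqP->|ain]]; first exact: connect0.
move: (ain); rewrite E mem_cat inE (negbTE az) /= => /orP[a1|a2].
  case: p1 E zp1 a1 {hz1} => [//|x1 p1'] [<- Ep] zp1 a1.
  move: pp; rewrite Ep cat_path => /andP[pp1 _].
  apply: connect_trans (path_conn' pp1 _ a1) _.
    apply/allP => w w1 /=; rewrite in_setD1; apply/andP; split.
      by apply/eqP => h; move: zp1; rewrite -h w1.
    by apply: inS; rewrite Ep -cat_cons mem_cat w1.
  apply: ind1 => //; rewrite in_setD1.
    apply/andP; split; last by apply: inS; apply: mem_head.
    by apply/eqP => h; move: zp1; rewrite -h mem_head.
  by rewrite uS andbT eq_sym.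
case: p2 E hz1 P2 L2 zp2 a2 => [//|y0 p2'] E _ /= /andP[ezy P2] L2 zp2 a2.
have al : all (mem (S :\ z)) (y0 :: p2').
  apply/allP => w w2 /=; rewrite in_setD1; apply/andP; split.
    by apply/eqP => h; move: zp2; rewrite -h w2.
  by apply: inS; rewrite E mem_cat; apply/orP; right; rewrite in_cons w2 orbT.
apply: connect_trans (path_conn' P2 al a2) _.
apply: connect_trans (path_conn P2 al (mem_last y0 p2')) _.
have yl : last y0 p2' \in S :\ z by apply: (allP al); apply: mem_last.
apply: ind1 => //; first by rewrite L2.
by rewrite in_setD1 uS andbT eq_sym.
Qed.


Lemma path_induced_all A x p : path (induced e A) x p -> all (mem A) p.
Proof. by elim: p x => //= y p IH x /andP[/and3P[_ _ yA] /IH ->]; rewrite andbT. Qed.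

Lemma key u a b : e u a -> e u b -> a != b -> connect (induced e [set~ u]) a b ->
  exists2 B, block e B & [&& u \in B, a \in B & b \in B].
Proof.
move=> eua eub ab /connectP[p pp Eb]; subst b.
have pe : path e a p by apply: sub_path pp => x y /and3P[].
have nu := path_induced_all pp.
move: eub ab; case: (shortenP pe) => p' pp' up' sub' eub ab.
have unp : u \notin a :: p'.
  rewrite in_cons negb_or; apply/andP; split.
    by apply/eqP => h; move: eua; rewrite h eirr.
  apply/negP => /sub' up; move/allP: nu => /(_ u up) /=; by rewrite in_setC1 eqxx.
have tc := cycle_two pp' up' unp eua eub ab.
have cS : block_cand e (u |: [set z in a :: p']) by rewrite /block_cand tc.
case: (cand_in_block cS) => B bB SB; exists B => //.
rewrite !(subsetP SB) //; rewrite in_setU1 ?eqxx // in_set ?mem_head ?mem_last orbT //.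
Qed.

Lemma block_nbr u B : block e B -> u \in B -> exists2 a, a \in B & e u a.
Proof.
move=> /andP[cB _] uB.
case: (pickP (fun z => (z \in B) && (z != u))) => [z /andP[zB zu]|none].
  case/connectP: (connected_conn (cand_connected cB) uB zB) => p pp Ez.
  case: p pp Ez => [_ Ez|y p /= /andP[/and3P[euy _ yB] _] _]; last by exists y.
  by move: zu; rewrite Ez /= eqxx.
have : B \subset [set u].
  apply/subsetP => z zB; rewrite in_set1; move: (none z); rewrite zB /=.
  by move/negbFE.
move/subset_leq_card; rewrite cards1 => h; move: (cand_card cB); by rewrite ltnNge h.
Qed.

Lemma blocks_le u k (cls : T -> 'I_k) :
  (forall a b, e u a -> e u b -> cls a = cls b -> a != b -> connect (induced e [set~ u]) a b) ->
  #|[set B | block e B & u \in B]| <= k.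
Proof.
move=> H; set P := [set B | block e B & u \in B].
pose f (B : {set T}) := odflt u [pick a | (a \in B) && e u a].
have fP B : B \in P -> (f B \in B) && e u (f B).
  rewrite inE => /andP[bB uB]; rewrite /f; case: pickP => [a //|none].
  case: (block_nbr bB uB) => a aB eua; by move: (none a); rewrite aB eua.
have nu w : e u w -> u != w by move=> h; apply/eqP => E; move: h; rewrite E eirr.
have inj : {in P &, injective (fun B => cls (f B))}.
  move=> B1 B2 H1 H2 /= E.
  have /andP[f1 e1] := fP _ H1; have /andP[f2 e2] := fP _ H2.
  have /andP[b1 u1] : block e B1 && (u \in B1) by move: H1; rewrite inE.
  have /andP[b2 u2] : block e B2 && (u \in B2) by move: H2; rewrite inE.
  case: (eqVneq (f B1) (f B2)) => [E12|N12].
    by apply: (block_eq b1 b2 (nu _ e1)) => //; rewrite E12.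
  case: (key e1 e2 N12 (H _ _ e1 e2 E N12)) => B3 b3 /and3P[u3 x3 y3].
  rewrite -(block_eq b3 b1 (nu _ e1) u3 x3 u1 f1).
  exact: (block_eq b3 b2 (nu _ e2) u3 y3 u2 f2).
rewrite -(card_in_imset inj); apply: leq_trans (max_card _) _; by rewrite card_ord.
Qed.

Lemma noncut_blocks u : ~~ cut_vertex e u -> #|[set B | block e B & u \in B]| <= 1.
Proof.
move=> H; apply: (@blocks_le u 1 (fun _ => ord0)) => a b eua eub _ ab.
have au : a != u by apply/eqP => h; move: eua; rewrite h eirr.
have bu : b != u by apply/eqP => h; move: eub; rewrite h eirr.
have cab : connect e a b.
  by apply: connect_trans (connect1 _) (connect1 eub); rewrite esym.
move/existsPn: H => /(_ a) /existsPn /(_ b); rewrite au bu cab /=; exact: negbNE.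
Qed.

Lemma nbr_le u : block_graph e ->
  #|[set y | e u y]| <= #|[set B | block e B & u \in B]| * (omega e - 1).
Proof.
move=> bg; set P := [set B | block e B & u \in B].
have sub : [set y | e u y] \subset \bigcup_(B in P) (B :\ u).
  apply/subsetP => y; rewrite inE => euy.
  case: (cand_in_block (edge_cand euy)) => B bB sB; apply/bigcupP; exists B.
    by rewrite inE bB (subsetP sB) // set21.
  rewrite in_setD1 (subsetP sB) ?set22 // andbT.
  by apply/eqP => h; move: euy; rewrite h eirr.
apply: leq_trans (subset_leq_card sub) _.
have h1 : #|\bigcup_(B in P) (B :\ u)| <= \sum_(B in P) #|B :\ u|.
  elim/big_rec2: _ => [|B n U _ IH]; first by rewrite cards0.
  apply: leq_trans (leq_card_setU _ _) _; by rewrite leq_add2l.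
apply: leq_trans h1 _; rewrite -sum_nat_const; apply: leq_sum => B.
rewrite inE => /andP[bB uB].
have := cardsD1 u B; rewrite uB => E.
have : #|B| <= omega e.
  by apply: (@leq_bigmax_cond _ (clique e) (fun S => #|S|) B); apply: bg.
lia.
Qed.

Lemma grundy_col_le bnd k (c : {ffun T -> 'I_k.+1}) :
  (forall x, #|[set y | e x y]| <= bnd) -> grundy_coloring e c -> k <= bnd.+1.
Proof.
move=> Hb /and4P[_ surj _ gr]; case: k c surj gr => // k c surj gr.
have /existsP[x /eqP cx] := implyP (forallP surj ord_max) isT.
pose f (j : 'I_k) : 'I_k.+2 := inord j.+1.
have finj : injective f.
  move=> j1 j2 /(congr1 (@nat_of_ord _)); rewrite /f !inordK;
    try (have := ltn_ord j1; have := ltn_ord j2; lia).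
  by move=> [] /val_inj.
have sub : f @: setT \subset c @: [set y | e x y].
  apply/subsetP => i /imsetP[j _ ->].
  have : (0 < f j < c x) by rewrite cx /f inordK //=; have := ltn_ord j; lia.
  move: (forallP (forallP gr x) (f j)) => /implyP H /H /existsP[y /andP[exy /eqP cy]].
  by apply/imsetP; exists y; rewrite ?inE.
have := subset_leq_card sub; rewrite card_imset // cardsT card_ord => h.
have h2 : #|c @: [set y | e x y]| <= #|[set y | e x y]| by apply: leq_imset_card.
have := Hb x; lia.
Qed.

Lemma grundy_le bnd : (forall x, #|[set y | e x y]| <= bnd) -> grundy_number e <= bnd.+1.
Proof.
move=> Hb; apply/bigmax_leqP => k /existsP[c gc]; exact: grundy_col_le Hb gc.
Qed.

Lemma path_avoid v x p : x != v -> (forall a, ~~ e v a) -> path e x p ->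
  path (induced e [set~ v]) x p.
Proof.
elim: p x => //= y p IH x xv nv /andP[exy pp].
have yv : y != v by apply/eqP => h; move: (nv x); rewrite -h esym exy.
by rewrite /induced /= exy !in_setC1 xv yv IH.
Qed.

Lemma cut_has_nbr v : cut_vertex e v -> exists a, e v a.
Proof.
case: (pickP (e v)) => [a eva _|none]; first by exists a.
move/existsP => [x /existsP[y /and4P[xv yv /connectP[p pp ->] /negP nc]]].
exfalso; apply: nc; apply/connectP; exists p => //.
by apply: path_avoid => // a; rewrite none.
Qed.

Lemma part1 : block_graph e -> has_cut_vertex e ->
  grundy_number e <= delta_tilde e * (omega e - 1) + 1.
Proof.
move=> bg [v cv]; rewrite addn1; apply: grundy_le => x.
apply: leq_trans (nbr_le x bg) _; apply: leq_mul => //.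
case: (boolP (cut_vertex e x)) => cx.
  exact: (@leq_bigmax_cond _ (cut_vertex e) (fun v => #|[set B : {set T} | block e B & v \in B]|) x cx).
apply: leq_trans (noncut_blocks cx) _.
apply: leq_trans (@leq_bigmax_cond _ (cut_vertex e) (fun v => #|[set B : {set T} | block e B & v \in B]|) v cv).
case: (cut_has_nbr cv) => a eva.
case: (cand_in_block (edge_cand eva)) => B bB sB.
apply/card_gt0P; exists B; by rewrite inE bB (subsetP sB) // set21.
Qed.
End Gen.

Section Constr.
Variables s q : nat.
Local Notation t := s.+2.
Local Notation P := q.+1.
Local Notation n := (s.+2 * q.+1).

Definition GT := option ('I_t * ('I_P + ('I_n.+1 * bool))).

Definition adj (x y : GT) : bool :=
  match x, y with
  | None, Some (_, inl _) => true
  | Some (i, inl j), Some (i', inl j') => (i == i') && (j != j')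
  | Some (i, inl _), Some (i', inr (d, b)) => [&& i == i', b & d < i * P]
  | Some (i, inr (d, b)), Some (i', inr (d', b')) =>
      [&& i == i', d != d', b != b', d < i * P & d' < i * P]
  | _, _ => false
  end.

Definition ge (x y : GT) : bool := adj x y || adj y x.

Definition col (x : GT) : nat :=
  match x with
  | None => n.+1
  | Some (i, inl j) => i * P + j + 1
  | Some (i, inr (d, _)) => if d < i * P then d + 1 else 1
  end.

Lemma iP_le (i : 'I_t) : i * P <= n - P.
Proof. have := ltn_ord i; nia. Qed.

Lemma col_le x : col x <= n.+1.
Proof.
case: x => [[i [j|[d b]]]|] //=.
  have := iP_le i; have := ltn_ord j; lia.
case: ifP => // h; have := iP_le i; lia.
Qed.

Lemma col_gt0 x : 0 < col x.
Proof. case: x => [[i [j|[d b]]]|] //=; [lia|case: ifP => _; lia]. Qed.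

Definition c : {ffun GT -> 'I_n.+2} := [ffun x => inord (col x)].

Lemma cE x : nat_of_ord (c x) = col x.
Proof. by rewrite ffunE inordK // ltnS col_le. Qed.

Lemma ge_sym : symmetric ge.
Proof. by move=> x y; rewrite /ge orbC. Qed.

Lemma ge_irr : irreflexive ge.
Proof. by case=> [[i [j|[d b]]]|]; rewrite /ge /adj /= ?eqxx ?andbF. Qed.

Lemma adj_col x y : adj x y -> col x != col y.
Proof.
case: x => [[i [j|[d b]]]|]; case: y => [[i' [j'|[d' b']]]|] //=.
- move=> /andP[/eqP <- jj]; apply/negP => /eqP h; move/negP: jj; apply; apply/eqP.
  apply: ord_inj; lia.
- move=> /and3P[/eqP <- _ hd]; rewrite hd; lia.
- move=> /and5P[/eqP <- dd _ hd hd']; rewrite hd hd'.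
  apply/negP => /eqP h; move/negP: dd; apply; apply/eqP; apply: ord_inj; lia.
- move=> _; have := iP_le i'; have := ltn_ord j'; lia.
Qed.

Lemma ge_col x y : ge x y -> col x != col y.
Proof. by case/orP => /adj_col //; rewrite eq_sym. Qed.

Lemma W_of_col k : 0 < k <= n -> exists (i : 'I_t) (j : 'I_P), i * P + j + 1 = k.
Proof.
move=> hk.
have ha : (k - 1) %/ P < t by rewrite ltn_divLR //; lia.
have hb : (k - 1) %% P < P by rewrite ltn_pmod.
exists (Ordinal ha), (Ordinal hb) => /=.
have := divn_eq (k - 1) P; lia.
Qed.

Lemma c_grundy : grundy_coloring ge c.
Proof.
apply/and4P; split.
- by apply/forallP => x; rewrite cE col_gt0.
- apply/forallP => i; apply/implyP => i0.
  case: (ltnP i n.+1) => hi.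
    have [a [b E]] : exists (a : 'I_t) (b : 'I_P), a * P + b + 1 = i by apply: W_of_col; lia.
    by apply/existsP; exists (Some (a, inl b)); apply/eqP; apply: ord_inj; rewrite /= cE /= E.
  apply/existsP; exists None; apply/eqP; apply: ord_inj; rewrite /= cE /=.
  have := ltn_ord i; lia.
- apply/forallP => x; apply/forallP => y; apply/implyP => /ge_col h.
  by apply: contra h => /eqP E; rewrite -!cE E.
apply/forallP => x; apply/forallP => k; apply/implyP; rewrite cE => /andP[k0 kx].
case: x kx => [[i [j|[d b]]]|] /= kx.
- case: (leqP k (i * P)) => hk.
  + have hd : k - 1 < n.+1 by have := iP_le i; lia.
    apply/existsP; exists (Some (i, inr (Ordinal hd, true))).
    rewrite /ge /= eqxx /=; apply/andP; split; first by apply/orP; left; lia.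
    apply/eqP; apply: ord_inj; rewrite /= cE /=; case: ifP; lia.
  + have hj : k - 1 - i * P < P by have := ltn_ord j; lia.
    apply/existsP; exists (Some (i, inl (Ordinal hj))).
    rewrite /ge /= eqxx /=; apply/andP; split.
      apply/orP; left; apply/negP => /eqP h; move: (congr1 (@nat_of_ord _) h) => /=; lia.
    apply/eqP; apply: ord_inj; rewrite /= cE /=; lia.
- move: kx; case: ifP => hd kx; last lia.
  have hd' : k - 1 < n.+1 by have := ltn_ord d; lia.
  apply/existsP; exists (Some (i, inr (Ordinal hd', ~~ b))).
  rewrite /ge /= eqxx /=; apply/andP; split.
    apply/orP; left; rewrite hd /=; apply/and3P; split; try lia.
      apply/negP => /eqP h; move: (congr1 (@nat_of_ord _) h) => /=; lia.
  apply/eqP; apply: ord_inj; rewrite /= cE /=; case: ifP; lia.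
- have [a [b E]] : exists (a : 'I_t) (b : 'I_P), a * P + b + 1 = k by apply: W_of_col; lia.
  by apply/existsP; exists (Some (a, inl b)); rewrite /ge /=; apply/eqP; apply: ord_inj; rewrite /= cE /= E.
Qed.


Definition recon (x : GT) (k : nat) : GT :=
  match x with
  | None => Some (inord ((k - 1) %/ P), inl (inord ((k - 1) %% P)))
  | Some (i, v) =>
     if k == n.+1 then None
     else if k <= i * P then
       Some (i, inr (inord (k - 1), match v with inl _ => true | inr (_, b) => ~~ b end))
     else Some (i, inl (inord (k - 1 - i * P)))
  end.

Ltac ordb := repeat match goal with
  | i : 'I_?m |- _ =>
     lazymatch goal with
     | _ : is_true (nat_of_ord i < m) |- _ => fail
     | _ => have := ltn_ord i; move=> ?
     end
  end.

Ltac ordt := repeat match goal with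
  | i : 'I_(s.+2) |- _ =>
     lazymatch goal with
     | _ : is_true (nat_of_ord i * P <= n - P) |- _ => fail
     | _ => have := iP_le i; move=> ?
     end
  end.

Ltac arith := ordb; ordt; lia.

Ltac decomp := repeat match goal with
 | H : is_true (_ && _) |- _ => case/andP: H => ? ?
 | H : is_true (_ || _) |- _ => case/orP: H => ?
 | H : is_true (@eq_op _ _ _) |- _ => move/eqP: H => ?
 end.

Lemma reconW (a : 'I_t) (b : 'I_P) :
  Some (inord ((a * P + b + 1 - 1) %/ P), inl (inord ((a * P + b + 1 - 1) %% P))) = Some (a, inl b) :> GT.
Proof.
have -> : a * P + b + 1 - 1 = a * P + b by lia.
by rewrite divnMDl // modnMDl divn_small // modn_small // addn0 !inord_val.
Qed.

Lemma recon_col x y : ge x y -> recon x (col y) = y.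
Proof.
rewrite /ge.
case: x => [[i [j|[d []]]]|]; case: y => [[i' [j'|[d' []]]]|] //=; rewrite ?orbF ?orFb => H;
 decomp; subst => //=; repeat (match goal with H : is_true _ |- _ => rewrite H /= end);
 repeat (case: ifPn => ?); try (exfalso; arith);
 try (by congr (Some (_, inl _)); apply: ord_inj; rewrite inordK; arith);
 try (by congr (Some (_, inr (_, _))); apply: ord_inj; rewrite inordK; arith).
all: try by [].
exact: reconW.
Qed.

Lemma deg_le x : #|[set y | ge x y]| <= n.
Proof.
set N := [set y | ge x y].
have inj : {in N &, injective c}.
  move=> y1 y2; rewrite !inE => h1 h2 /(congr1 (@nat_of_ord _)); rewrite !cE => E.
  by rewrite -(recon_col h1) -(recon_col h2) E.
have sub : c @: N \subset ~: [set ord0; c x].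
  apply/subsetP => k /imsetP[y]; rewrite inE => hy ->.
  rewrite !inE negb_or; apply/andP; split.
    apply/eqP => /(congr1 (@nat_of_ord _)); rewrite cE /=; have := col_gt0 y; lia.
  apply/eqP => /(congr1 (@nat_of_ord _)); rewrite !cE => E.
  by move: (ge_col hy); rewrite E eqxx.
have := subset_leq_card sub; rewrite card_in_imset //.
have := cardsC [set ord0; c x]; rewrite cards2 card_ord.
have -> : (ord0 != c x) by apply/eqP => /(congr1 (@nat_of_ord _)); rewrite cE /=; have := col_gt0 x; lia.
lia.
Qed.

Definition fcl (x : GT) : option 'I_P :=
  match x with
  | None => None
  | Some (_, inl j) => Some j
  | Some (_, inr (_, b)) => if b then None else Some ord0
  end.

Lemma fcl_nadj x y : x != y -> fcl x = fcl y -> ~~ ge x y.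
Proof.
rewrite /ge.
case: x => [[i [j|[d b]]]|]; case: y => [[i' [j'|[d' b']]]|] //=; rewrite ?orbF ?orFb;
  try case: b; try case: b'; rewrite //= ?andbF //; move=> _ [->]; by rewrite eqxx !andbF.
Qed.

Lemma clique_le K : clique ge K -> #|K| <= q.+2.
Proof.
move=> cK.
have inj : {in K &, injective fcl}.
  move=> x y xK yK E; apply/eqP; apply: contraT => xy.
  have := fcl_nadj xy E.
  by move/forallP: cK => /(_ x) /implyP /(_ xK) /forallP /(_ y) /implyP /(_ yK) /implyP /(_ xy) ->.
rewrite -(card_in_imset inj); apply: leq_trans (max_card _) _.
by rewrite card_option card_ord.
Qed.

Lemma omega_eq : omega ge = q.+2.
Proof.
apply/eqP; rewrite eqn_leq; apply/andP; split.
  by apply/bigmax_leqP => K; apply: clique_le.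
pose K0 : {set GT} := None |: ((fun j : 'I_P => Some (ord0, inl j)) @: [set: 'I_P]).
have cK : clique ge K0.
  apply/forallP => x; apply/implyP => xK; apply/forallP => y; apply/implyP => yK.
  apply/implyP => xy.
  move: xK yK xy; rewrite !inE => /orP[/eqP->|/imsetP[j _ ->]] /orP[/eqP->|/imsetP[j' _ ->]] //=.
  move=> jj; rewrite /ge /=; apply/orP; left; apply: contraNN jj => /eqP->; by [].
have -> : q.+2 = #|K0|.
  rewrite cardsU1 card_imset; last by move=> j1 j2 [].
  rewrite cardsT card_ord.
  by case: imsetP => [[j _ E] //|_].
rewrite /omega. apply: (@leq_bigmax_cond _ _ _ K0). exact: cK.
Qed.


Definition lab (x : GT) : nat := if x is Some (i, _) then i else 0.

Lemma ge_lab x y : x != None -> y != None -> ge x y -> lab x = lab y.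
Proof.
case: x => [[i [j|[d []]]]|]; case: y => [[i' [j'|[d' []]]]|] //=; rewrite /ge /= => _ _ H;
 decomp; subst => //.
Qed.

Lemma lab_conn (A : {set GT}) x y : None \notin A -> connect (induced ge A) x y -> lab x = lab y.
Proof.
move=> nA /connectP[p pp ->]; elim: p x pp => //= z p IH x /andP[/and3P[exz xA zA] pp].
rewrite -(IH z pp); apply: ge_lab exz.
  by apply/eqP => h; move: nA; rewrite -h xA.
by apply/eqP => h; move: nA; rewrite -h zA.
Qed.

Lemma nbrN a : ge None a -> exists i j, a = Some (i, inl j).
Proof. case: a => [[i [j|[d b]]]|] //= _; by exists i, j. Qed.

Lemma nbrW i j a : ge (Some (i, inl j)) a ->
  [\/ a = None, exists2 j', a = Some (i, inl j') & j' != j |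
      exists2 d, a = Some (i, inr (d, true)) & d < i * P].
Proof.
case: a => [[i' [j'|[d b]]]|]; rewrite /ge /=.
- case/orP => /andP[/eqP E jj]; subst; apply: Or32; exists j' => //; by rewrite eq_sym.
- rewrite orbF => /and3P[/eqP E bb hd]; subst; apply: Or33; exists d => //; by case: b bb.
- by move=> _; apply: Or31.
Qed.

Lemma nbrC i d b a : ge (Some (i, inr (d, b))) a ->
  (exists2 j', a = Some (i, inl j') & b && (d < i * P)) \/
  (exists2 d', a = Some (i, inr (d', ~~ b)) & [&& d' != d, d < i * P & d' < i * P]).
Proof.
case: a => [[i' [j'|[d' b']]]|]; rewrite /ge /= ?orbF.
- by move=> /and3P[/eqP E bb hd]; subst; left; exists j'; rewrite ?bb.
- case/orP => /and5P[/eqP E dd bb hd hd']; subst; right; exists d'.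
  + by case: b b' bb {hd hd' dd} => [] [].
  + by rewrite eq_sym dd hd hd'.
  + by case: b b' bb {hd hd' dd} => [] [].
  + by rewrite dd hd hd'.
- by [].
Qed.

Lemma crown_neq (i i' : 'I_t) (d1 d2 : 'I_n.+1) b1 b2 : d1 != d2 ->
  Some (i, inr (d1, b1)) != Some (i', inr (d2, b2)) :> GT.
Proof.
move=> h; apply/eqP => /(congr1 (fun x : GT => if x is Some (_, inr (d, _)) then nat_of_ord d else 0)) /= E.
by move: h; rewrite (ord_inj E) eqxx.
Qed.

Lemma W_neq (i i' : 'I_t) (j1 j2 : 'I_P) : j1 != j2 ->
  Some (i, inl j1) != Some (i', inl j2) :> GT.
Proof.
move=> h; apply/eqP => /(congr1 (fun x : GT => if x is Some (_, inl j) then nat_of_ord j else 0)) /= E.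
by move: h; rewrite (ord_inj E) eqxx.
Qed.


Lemma inS1 (u x : GT) : x != u -> x \in [set~ u].
Proof. by rewrite in_setC1. Qed.

Ltac fin := rewrite ?inS1 /ge /= ?eqxx /= ?orbT ?andbT //; try (apply/eqP; discriminate).

Lemma blocks_le_t u : #|[set B | block ge B & u \in B]| <= t.
Proof.
case: u => [[i [j|[d b]]]|].
-
  case: (eqVneq q 0) => q0.
  + apply: (@blocks_le _ _ ge_sym ge_irr _ t
        (fun x : GT => match x with Some (_, inr (d, _)) => inord d.+1 | _ => ord0 end)).
    move=> a a' /nbrW[->|[j' -> jj]|[d1 -> hd1]] /nbrW[->|[j'' -> jj']|[d2 -> hd2]] //= E D;
      try (by exfalso; move: jj; apply/negP; rewrite negbK; apply/eqP; apply: ord_inj;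
           have := ltn_ord j; have := ltn_ord j'; lia);
      try (by exfalso; move: jj'; apply/negP; rewrite negbK; apply/eqP; apply: ord_inj;
           have := ltn_ord j; have := ltn_ord j''; lia).
    * exfalso; move: (congr1 (@nat_of_ord _) E); rewrite inordK /=; first by [].
      have := iP_le i; nia.
    * exfalso; move: (congr1 (@nat_of_ord _) E); rewrite inordK /=; first by [].
      have := iP_le i; nia.
    * exfalso; move: (congr1 (@nat_of_ord _) E); rewrite !inordK; try (have := iP_le i; nia).
      move=> [] dd; move: D; have -> : d1 = d2 by apply: ord_inj.
      by rewrite eqxx.
  + pose j2 : 'I_P := if j == ord0 then inord 1 else ord0.
    have j2j : j2 != j.
      rewrite /j2; case: (eqVneq j ord0) => [->|jn] /=; last by rewrite eq_sym.
      apply/negP => /eqP/(congr1 (@nat_of_ord _)); rewrite inordK /=; lia.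
    set u := Some (i, inl j) : GT.
    set r := Some (i, inl j2) : GT.
    have ru : r != u by apply: contraNN j2j => /eqP [->].
    have toR a : ge u a -> connect (induced ge [set~ u]) a r.
      case/nbrW => [->|[j' -> jj]|[d1 -> hd1]].
      * by apply: ind1; rewrite ?inS1 //.
      * case: (eqVneq j' j2) => [->|jj2]; first exact: connect0.
        apply: ind1; rewrite ?inS1 //; first by rewrite /ge /= eqxx jj2.
        by apply: contraNN jj => /eqP [->].
      * by apply: ind1; rewrite ?inS1 ?/u /ge /= ?eqxx ?hd1 ?orbT //; apply/eqP; discriminate.
    apply: (@blocks_le _ _ ge_sym ge_irr _ t (fun _ => ord0)) => a a' ha ha' _ _.
    apply: connect_trans (toR _ ha) _; rewrite (isym ge_sym); exact: toR.
-
  apply: (@blocks_le _ _ ge_sym ge_irr _ t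
        (fun x : GT => match x with Some (_, inl _) => ord0 | _ => inord 1 end)).
  have toW d1 d2 b1 : d1 != d2 -> d1 != d -> d2 != d -> d1 < i * P -> d2 < i * P ->
      connect (induced ge [set~ Some (i, inr (d, b))]) (Some (i, inr (d1, b1))) (Some (i, inl ord0)).
    move=> d12 d1d d2d h1 h2.
    have c2 : connect (induced ge [set~ Some (i, inr (d, b))]) (Some (i, inr (d2, true))) (Some (i, inl ord0)).
      apply: ind1; fin; rewrite ?h2 ?orbT //; exact: crown_neq.
    case: b1.
      apply: ind1; fin; rewrite ?h1 ?orbT //; exact: crown_neq.
    apply: connect_trans c2; apply: ind1; fin; rewrite ?d12 ?h1 ?h2 //; exact: crown_neq.
  move=> a a' /nbrC[[j1 -> /andP[bb hd]]|[d1 -> /and3P[d1d hd h1]]]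
              /nbrC[[j2 -> _]|[d2 -> /and3P[d2d _ h2]]] //= E D.
  + have jj : j1 != j2 by apply: contraNN D => /eqP ->.
    by apply: ind1; fin; rewrite jj.
  + exfalso; move: (congr1 (@nat_of_ord _) E); rewrite inordK //.
  + exfalso; move: (congr1 (@nat_of_ord _) E); rewrite inordK //.
  + have d12 : d1 != d2 by apply: contraNN D => /eqP ->.
    apply: connect_trans (toW _ _ _ d12 d1d d2d h1 h2) _.
    rewrite (isym ge_sym); have d21 : d2 != d1 by rewrite eq_sym.
    exact: (toW _ _ _ d21 d2d d1d h2 h1).
-
  apply: (@blocks_le _ _ ge_sym ge_irr _ t (fun x : GT => inord (lab x))).
  move=> a a' /nbrN[i [j ->]] /nbrN[i' [j' ->]] /= E D.
  have ii : i = i'.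
    apply: ord_inj; move: (congr1 (@nat_of_ord _) E); rewrite !inordK //; lia.
  subst i'; apply: ind1; rewrite ?inS1 // /ge /= eqxx.
  by apply/orP; left; apply: contraNN D => /eqP ->.
Qed.


Lemma cut_None : cut_vertex ge None.
Proof.
apply/existsP; exists (Some (ord0, inl ord0)); apply/existsP; exists (Some (inord 1, inl ord0)).
apply/and4P; split => //.
  apply: connect_trans (connect1 (_ : ge _ None)) (connect1 (_ : ge None _)); by rewrite /ge /= ?orbT.
apply/negP => /lab_conn; rewrite in_setC1 eqxx => /(_ isT) /=; rewrite inordK //.
Qed.

Lemma blocks_None_ge : t <= #|[set B | block ge B & None \in B]|.
Proof.
have [g gP] : exists g : 'I_t -> {set GT},
    forall i, [&& block ge (g i), None \in g i & Some (i, inl ord0) \in g i].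
  exists (fun i => odflt set0 [pick B | block ge B && (None \in B) && (Some (i, inl ord0) \in B)]) => i.
  case: pickP => [B /andP[/andP[-> ->] ->] //|none].
  have e0 : ge None (Some (i, inl ord0)) by [].
  case: (cand_in_block (edge_cand e0)) => B bB sB.
  by move: (none B); rewrite bB !(subsetP sB) ?set21 ?set22.
have ginj : injective g.
  move=> i1 i2 E; move: (gP i1) (gP i2); rewrite -E.
  move=> /and3P[/andP[cB _] nB w1] /and3P[_ _ w2].
  apply/eqP; apply: contraT => i12.
  have w12 : Some (i1, inl ord0) != Some (i2, inl ord0) :> GT.
    apply/eqP => /(congr1 (fun x : GT => lab x)) /= /ord_inj h; by rewrite h eqxx in i12.
  case/orP: cB => [/and3P[_ _ /forallP/(_ None)]|/existsP[x /existsP[y /andP[/eqP Ex _]]]].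
    rewrite nB /= => cD.
    have := connected_conn cD (_ : Some (i1, inl ord0) \in g i1 :\ None) (_ : Some (i2, inl ord0) \in g i1 :\ None).
    rewrite !in_setD1 w1 w2 /= => /(_ isT isT) /lab_conn; rewrite !inE eqxx /= => /(_ isT) /= /ord_inj h.
    by rewrite h eqxx in i12.
  move: nB w1 w2 w12; rewrite Ex !inE.
  by case/orP => /eqP Hn; case/orP => /eqP H1; case/orP => /eqP H2; subst; rewrite ?H2 ?eqxx.
have sub : g @: [set: 'I_t] \subset [set B | block ge B & None \in B].
  apply/subsetP => B /imsetP[i _ ->]; rewrite inE; by case/and3P: (gP i) => -> ->.
have := subset_leq_card sub; rewrite card_imset // cardsT card_ord; exact.
Qed.

Lemma delta_eq : delta_tilde ge = t.
Proof.
apply/eqP; rewrite eqn_leq; apply/andP; split.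
  apply/bigmax_leqP => u _; exact: blocks_le_t.
apply: leq_trans blocks_None_ge _.
exact: (@leq_bigmax_cond _ (cut_vertex ge) (fun v => #|[set B : {set GT} | block ge B & v \in B]|) None cut_None).
Qed.

Lemma grundy_eq : grundy_number ge = n.+1.
Proof.
apply/eqP; rewrite eqn_leq; apply/andP; split.
  apply: grundy_le => x; exact: deg_le.
have hT : n.+1 < #|{: GT}|.+1.
  rewrite /GT card_option card_prod card_sum card_prod !card_ord card_bool; nia.
pose i0 : 'I_#|{: GT}|.+1 := Ordinal hT.
have hg : has_grundy ge i0 by apply/existsP; exists c; exact: c_grundy.
rewrite /grundy_number; apply: (@leq_bigmax_cond _ _ _ i0); exact: hg.
Qed.

End Constr.

Theorem proposition6 :
  (forall (T : finType) (e : rel T),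
      simple_graph e -> block_graph e -> has_cut_vertex e ->
      grundy_number e <= delta_tilde e * (omega e - 1) + 1)
  /\
  (forall t p : nat, 2 <= t -> 2 <= p ->
      exists (T : finType) (e : rel T),
        [/\ simple_graph e, delta_tilde e = t, omega e = p &
            grundy_number e = t * (p - 1) + 1]).
Proof.
split.
  move=> T e [esym eirr] bg hc; exact: part1.
move=> t p ht hp; case: t ht => [|[|s]] // _; case: p hp => [|[|q]] // _.
eexists; exists (@ge s q); split.
- split; [exact: ge_sym | exact: ge_irr].
- exact: delta_eq.
- exact: omega_eq.
- by rewrite grundy_eq subn1 addn1.
Qed.
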